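(* Let $k\ge2$ and let $C_{3k}$ be the cycle on $3k$ vertices. Then $i\gamma(C_{3k})=k$, so $|V(C_{3k})|-i\gamma(C_{3k})=2k$. Moreover, if $M\subseteq V(C_{3k})$ is a set of $2k$ vertices inducing a matching of size $k$ in $C_{3k}$, then $M$ is a cover of $C_{3k}$, and for $W_1=\dots=W_{2k-1}=M$ there is no cover $W=\{w_{i_1},\dots,w_{i_t}\}$ of $C_{3k}$ with $1\le i_1<\dots<i_t\le 2k-1$ and $w_{i_j}\in W_{i_j}$ for all $j$.
   Context: A cover of a graph is a vertex set containing at least one endpoint of every edge. $\gamma(G;A)$ is the minimum size of a set $D$ such that every vertex of $A$ has a neighbor in $D$; $i\gamma(G)=\max\{\gamma(G;I): I\text{ an independent set of }G\}$. *)

(* Defs.v *)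
(* Graphs are symmetric relations on a finType. *)
From mathcomp Require Import all_boot.
Set Implicit Arguments. Unset Strict Implicit. Unset Printing Implicit Defensive.

Section GraphDefs.
Variable T : finType.
Variable e : rel T.

Definition is_cover (W : {set T}) : Prop :=
  forall x y, e x y -> (x \in W) || (y \in W).

Definition dominates_set (A D : {set T}) : bool :=
  [forall a in A, exists d in D, e a d].

(* gamma(G;A) : minimum size of such a D (default #|T| if none exists,
   which never matters when such D exist since then the min is <= #|T|) *)
Definition gammaA (A : {set T}) : nat :=
  \big[minn/#|T|]_(D : {set T} | dominates_set A D) #|D|.

Definition independent (I : {set T}) : bool :=
  [forall x in I, forall y in I, ~~ e x y].

Definition igamma : nat :=
  \max_(I : {set T} | independent I) gammaA I.

Definition induced_edges (M : {set T}) : {set {set T}} :=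
  [set [set p.1; p.2] | p in [set p : T * T | (p.1 \in M) && (p.2 \in M) && e p.1 p.2]].

Definition induces_matching_of_size (M : {set T}) (m : nat) : Prop :=
  (forall x, x \in M -> #|[set y in M | e x y]| <= 1) /\ #|induced_edges M| = m.
End GraphDefs.

Definition cycle_rel (n : nat) : rel 'I_n :=
  fun i j => (val j == (val i).+1 %% n) || (val i == (val j).+1 %% n).
Arguments cycle_rel n : clear implicits.

(* Main.v *)
Require Import Defs.
From mathcomp Require Import all_boot zify.
Set Implicit Arguments. Unset Strict Implicit. Unset Printing Implicit Defensive.

Section C.
Variable k : nat.
Hypothesis hk : 2 <= k.

Lemma sE x : x < 3*k -> x.+1 %% (3*k) = if x.+1 == 3*k then 0 else x.+1.
Proof. move=> h; case: eqP => [->|h']; first by rewrite modnn. by rewrite modn_small //; lia. Qed.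

Lemma cr_val (x y : 'I_(3*k)) : cycle_rel (3*k) x y = [|| ((y:nat) == (x:nat) + 1), ((x:nat) == 3*k-1) && ((y:nat) == 0), ((x:nat) == (y:nat) + 1) | ((y:nat) == 3*k-1) && ((x:nat) == 0)].
Proof.
rewrite /cycle_rel /= !sE //; have := ltn_ord x; have := ltn_ord y.
case: ifP; case: ifP => *; apply/idP/idP => ?; lia.
Qed.

Notation e := (cycle_rel (3*k)).

Lemma e_sym x y : e x y = e y x.
Proof. by rewrite /cycle_rel orbC. Qed.

Lemma e_irr x : e x x = false.
Proof. apply/negbTE/negP; rewrite cr_val => ?; lia. Qed.

Lemma kpos : 0 < k. Proof. lia. Qed.

Definition vtx (m : nat) (h : m < 3*k) : 'I_(3*k) := Ordinal h.

Lemma bigmin_le (T:finType) (P : pred T) (F : T -> nat) x j :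
  P j -> \big[minn/x]_(i | P i) F i <= F j.
Proof.
move=> Pj; rewrite -big_filter.
have : j \in [seq i <- index_enum T | P i] by rewrite mem_filter Pj mem_index_enum.
elim: [seq i <- index_enum T | P i] => //= a s IH; rewrite in_cons big_cons.
case/orP => [/eqP<-|/IH h]; first exact: geq_minl.
exact: leq_trans (geq_minr _ _) h.
Qed.

Lemma gamma_le (I : {set 'I_(3*k)}) : independent e I -> gammaA e I <= k.
Proof.
move=> /forallP indI.
have ind : forall x y, x \in I -> y \in I -> ~~ e x y.
  by move=> x y xI yI; move: (indI x); rewrite xI /= => /forallP /(_ y); rewrite yI.
pose D := [set d : 'I_(3*k) | ((d %% 3 == 1) && (d \notin I)) ||
            ((d %% 3 == 2) && [exists y in I, (y:nat) == d.-1])].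
have qP : forall d : 'I_(3*k), d %/ 3 < k.
  by move=> d; rewrite ltn_divLR //; have := ltn_ord d; lia.
pose q (d : 'I_(3*k)) : 'I_k := Ordinal (qP d).
have cardD : #|D| <= k.
  rewrite -(card_in_imset (f := q)); first by rewrite -[X in _ <= X]card_ord max_card.
  move=> d d' /[!inE] hd hd' /(congr1 val) /= hq; apply/val_inj => /=.
  case/orP: hd => /andP [h1 h2]; case/orP: hd' => /andP [h1' h2']; try lia.
  - case/existsP: h2' => y /andP [yI /eqP yv].
    have : y = d by apply/val_inj => /=; lia.
    by move=> yd; rewrite -yd yI in h2.
  - case/existsP: h2 => y /andP [yI /eqP yv].
    have : y = d' by apply/val_inj => /=; lia.
    by move=> yd; rewrite -yd yI in h2'.
have domD : dominates_set e I D.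
  apply/forall_inP => a aI.
  have := ltn_ord a => alt.
  have : [|| a %% 3 == 0, a %% 3 == 1 | a %% 3 == 2] by lia.
  case/or3P => ha.
  - have h1 : a.+1 < 3*k by lia.
    apply/exists_inP; exists (vtx h1).
      rewrite inE /=; apply/orP; left; apply/andP; split; first by lia.
      apply/negP => h; move: (ind _ _ aI h); rewrite cr_val /=; lia.
    rewrite cr_val /=; lia.
  - have h1 : a.+1 < 3*k by lia.
    apply/exists_inP; exists (vtx h1).
      rewrite inE /=; apply/orP; right; apply/andP; split; first by lia.
      by apply/existsP; exists a; rewrite aI /=.
    rewrite cr_val /=; lia.
  - have h1 : a.-1 < 3*k by lia.
    apply/exists_inP; exists (vtx h1); last by rewrite cr_val /=; lia.
    rewrite inE /=; apply/orP; left; apply/andP; split; first by lia.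
    apply/negP => h; move: (ind _ _ aI h); rewrite cr_val /=; lia.
apply: leq_trans cardD.
exact: bigmin_le.
Qed.

Lemma gamma_ge : exists I, independent e I /\ k <= gammaA e I.
Proof.
pose I0 := [set a : 'I_(3*k) | a %% 3 == 0].
exists I0; split.
  apply/forall_inP => x; rewrite inE => hx; apply/forall_inP => y; rewrite inE => hy.
  have := ltn_ord x; have := ltn_ord y.
  by rewrite cr_val => *; lia.
rewrite /gammaA; apply: (big_ind (fun m => k <= m)).
- rewrite card_ord; lia.
- by move=> a b ha hb; rewrite leq_min ha hb.
move=> D /forall_inP domD.
have vP : forall j : 'I_k, 3 * j < 3 * k by move=> j; have := ltn_ord j; lia.
pose v (j : 'I_k) : 'I_(3*k) := Ordinal (vP j).
have hv : forall j, v j \in I0 by move=> j; rewrite inE /=; lia.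
pose f (j : 'I_k) : 'I_(3*k) := odflt (v j) [pick d in D | e (v j) d].
have fP : forall j, f j \in D /\ e (v j) (f j).
  move=> j; rewrite /f; case: pickP => [d /andP [dD ed] | none] //=.
  have := domD _ (hv j); case/exists_inP => d dD ed.
  by move: (none d); rewrite dD ed.
have finj : injective f.
  move=> j j' h; have [_ e1] := fP j; have [_ e2] := fP j'.
  rewrite h in e1; apply/val_inj.
  have := ltn_ord (f j'); have := ltn_ord j; have := ltn_ord j'.
  move: e1 e2; rewrite !cr_val /= => *; lia.
rewrite -[X in X <= _]card_ord -(card_imset _ finj).
apply/subset_leq_card/subsetP => d /imsetP [j _ ->]; by case: (fP j).
Qed.

Lemma igamma_eq : igamma e = k.
Proof.
apply/eqP; rewrite eqn_leq; apply/andP; split.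
  by apply/bigmax_leqP => I; apply: gamma_le.
have [I [hI hk']] := gamma_ge.
by apply: leq_trans hk' _; apply: leq_bigmax_cond.
Qed.

Lemma cardN (x : 'I_(3*k)) : #|[set y | e x y]| = 2.
Proof.
have sP : (if x.+1 == 3*k then 0 else x.+1) < 3*k by have := ltn_ord x; case: ifP => ?; lia.
have pP : (if (x:nat) == 0 then 3*k-1 else x.-1) < 3*k by have := ltn_ord x; case: ifP => ?; lia.
have -> : [set y | e x y] = [set Ordinal sP; Ordinal pP].
  apply/setP => y; rewrite !inE -!val_eqE /= cr_val.
  have := ltn_ord x; have := ltn_ord y.
  case: ifP; case: ifP => *; apply/idP/idP => ?; lia.
rewrite cards2; suff -> : Ordinal sP != Ordinal pP by [].
rewrite -val_eqE /=.
have := ltn_ord x; case: ifP; case: ifP => *; lia.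
Qed.

Lemma cardf (x : 'I_(3*k)) (A : {set 'I_(3*k)}) :
  #|[set y in A | e x y]| = \sum_(y in A) e x y.
Proof.
rewrite -sum1_card big_mkcond [RHS]big_mkcond; apply: eq_bigr => y _.
by rewrite inE; case: (y \in A); case: (e x y).
Qed.

Section Part3.
Variable M : {set 'I_(3*k)}.
Hypothesis hM : #|M| = 2 * k.
Hypothesis hm : induces_matching_of_size e M k.

Lemma hasMnb m : m \in M -> exists y, y \in M /\ e m y.
Proof.
case: hm => hdeg hE.
set E := induced_edges e M in hE.
have formE : forall A x, A \in E -> x \in A ->
    x \in M /\ exists y, y \in M /\ e x y /\ A = [set x; y].
  move=> A x /imsetP [[a b]] /[!inE] /= /andP[/andP[aM bM] eab] -> /set2P [->|->].
  - by split => //; exists b.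
  - by split => //; exists a; rewrite e_sym eab setUC.
have triv : trivIset E.
  apply/trivIsetP => A B AE BE neq.
  rewrite -setI_eq0; apply/negPn/negP => /set0Pn [x /setIP [xA xB]].
  have [xM [y [yM [exy eA]]]] := formE _ _ AE xA.
  have [_ [y' [yM' [exy' eB]]]] := formE _ _ BE xB.
  move/card_le1_eqP: (hdeg x xM) => H.
  have hyy : y = y' by apply: H; rewrite inE ?yM ?yM' ?exy ?exy'.
  by move: neq; rewrite eA eB hyy eqxx.
have c2 : {in E, forall A : {set 'I_(3*k)}, #|A| = 2}.
  move=> A /imsetP [[a b]] /[!inE] /= /andP[_ eab] ->; rewrite cards2.
  by case: eqP eab => [->|]; [rewrite e_irr | ].
have cov : #|cover E| = 2*k.
  rewrite (card_uniform_partition c2) ?hE; first by rewrite mulnC.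
  rewrite /partition eqxx triv /=; apply/negP => /c2; by rewrite cards0.
have sub : cover E \subset M.
  apply/bigcupsP => A AE; apply/subsetP => x xA; by case: (formE _ _ AE xA).
have : cover E == M by rewrite eqEcard sub cov hM leqnn.
move/eqP => eqM mM; rewrite -eqM in mM.
case/bigcupP: mM => A AE mA.
have [_ [y [yM [emy _]]]] := formE _ _ AE mA; by exists y.
Qed.

Lemma outdeg m : m \in M -> #|[set y in ~:M | e m y]| = 1.
Proof.
move=> mM; case: hm => hdeg _.
have s2 : #|[set y in M | e m y]| + #|[set y in ~:M | e m y]| = 2.
  have e1 : [set y in M | e m y] = [set y | e m y] :&: M by apply/setP => y; rewrite !inE andbC.
  have e2 : [set y in ~:M | e m y] = [set y | e m y] :\: M by apply/setP => y; rewrite !inE andbC.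
  by rewrite e1 e2 cardsID cardN.
have [y [yM emy]] := hasMnb mM.
have : 0 < #|[set y in M | e m y]| by apply/card_gt0P; exists y; rewrite inE yM emy.
move=> h2; have h1 := hdeg m mM.
have h3 : #|[set y in M | e m y]| = 1 by apply/eqP; rewrite eqn_leq h1 h2.
by move: s2; rewrite h3 => -[].
Qed.

Lemma nbM x0 : x0 \notin M -> forall y, e x0 y -> y \in M.
Proof.
have dc : \sum_(m in M) #|[set y in ~:M | e m y]| = \sum_(x in ~:M) #|[set y in M | e x y]|.
  under eq_bigr do rewrite cardf; rewrite exchange_big /=.
  apply: eq_bigr => z _; rewrite cardf; apply: eq_bigr => y _; by rewrite e_sym.
rewrite (eq_bigr (fun _ => 1)) ?sum1_card ?hM in dc; last by move=> *; apply: outdeg.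
have cC : #|~: M| = k by have := cardsC M; rewrite card_ord hM; lia.
have le2 : forall x, #|[set y in M | e x y]| <= 2.
  move=> x; rewrite -[X in _ <= X](cardN x); apply: subset_leq_card; apply/subsetP => y; rewrite !inE; by case/andP.
have z : \sum_(x in ~:M) (2 - #|[set y in M | e x y]|) = 0.
  have : \sum_(x in ~:M) (2 - #|[set y in M | e x y]|) + \sum_(x in ~:M) #|[set y in M | e x y]| = 2 * k.
    rewrite -big_split /= (eq_bigr (fun _ => 2)); last by move=> x _; rewrite subnK.
    by rewrite sum_nat_const cC mulnC.
  rewrite -dc; lia.
move=> xM y exy.
move/eqP: z; rewrite sum_nat_eq0 => /forall_inP /(_ x0); rewrite inE xM => /(_ isT) /eqP h.
have : [set y in M | e x0 y] = [set y | e x0 y].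
  apply/eqP; rewrite eqEcard cardN; apply/andP; split; last by lia.
  apply/subsetP => z; rewrite !inE; by case/andP.
by move/setP/(_ y); rewrite !inE exy andbT => ->.
Qed.

End Part3.
End C.

Theorem mainTheorem8 (k : nat) (hk : 2 <= k) :
  igamma (cycle_rel (3 * k)) = k /\
  #|'I_(3 * k)| - igamma (cycle_rel (3 * k)) = 2 * k /\
  (forall M : {set 'I_(3 * k)},
      #|M| = 2 * k -> induces_matching_of_size (cycle_rel (3 * k)) M k ->
      is_cover (cycle_rel (3 * k)) M /\
      forall W : 'I_(2 * k - 1) -> {set 'I_(3 * k)},
        (forall i, W i = M) ->
        ~ exists (S : {set 'I_(2 * k - 1)}) (w : 'I_(2 * k - 1) -> 'I_(3 * k)),
            (forall i, i \in S -> w i \in W i) /\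
            is_cover (cycle_rel (3 * k)) [set w i | i in S]).
Proof.
split; first exact: igamma_eq hk.
split; first by rewrite card_ord (igamma_eq hk); lia.
move=> M hM hm; split.
  move=> x y exy; case xM: (x \in M) => //=; exact: (nbM hk hM hm (negbT xM) exy).
move=> W hW [S [w [hw hc]]].
have sub : M \subset [set w i | i in S].
  apply/subsetP => m mM.
  have : 0 < #|[set y in ~:M | cycle_rel (3*k) m y]| by rewrite (outdeg hk hM hm mM).
  case/card_gt0P => y; rewrite !inE => /andP [yM emy].
  case/orP: (hc m y emy) => // /imsetP [i iS yi].
  by move: (hw i iS); rewrite hW -yi (negbTE yM).
have h1 := subset_leq_card sub; rewrite hM in h1.
have h2 := leq_trans h1 (leq_imset_card w S).
have h3 := leq_trans h2 (max_card _); rewrite card_ord in h3.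
move: h3; lia.
Qed.
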